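(* Let $n,k$ be positive integers with $k^2<2n$. Then for every $\pi\in\mathfrak{S}_k\setminus\{\mathrm{id}\}$, $$|\operatorname{Wg}(\pi)|\le\frac{2}{n^kk^2}\Big(\frac{k^2}{2n}\Big)^{|\pi|}\frac{1}{1-\frac{k^2}{2n}},$$ and $$|\operatorname{Wg}(\mathrm{id})|\le\frac1{n^k}+\frac{k^2}{2n^{k+2}}\,\frac{1}{1-\frac{k^4}{4n^2}}.$$
   Context: $\mathfrak{S}_k$ is the symmetric group on $\{1,\dots,k\}$. For $\sigma\in\mathfrak{S}_k$, $|\sigma|$ is the minimal number of transpositions needed to write $\sigma$ as a product of transpositions. The Weingarten function (depending on $n$ and $k$) is $\operatorname{Wg}(\pi)=\frac1{n^k}\sum_{r\ge0}(-1)^r\frac{c_r(\pi)}{n^r}$, where $c_r(\pi)$ is the number of tuples $(s_1,\dots,s_r,t_1,\dots,t_r)$ with $1\le s_i<t_i\le k$ for all $i$, $t_1\le\cdots\le t_r$, and $\pi=(s_1\,t_1)\cdots(s_r\,t_r)$ ($(s\,t)$ the transposition). *)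

(* Defs.v *)
From Stdlib Require Import Reals.
From mathcomp Require Import all_boot all_fingroup.

Set Implicit Arguments.
Unset Strict Implicit.
Unset Printing Implicit Defensive.

(* S_k is {perm 'I_k}; the points 1..k are encoded as the ordinals 0..k-1. *)

Definition trans_prod (k r : nat) (f : {ffun 'I_r -> 'I_k * 'I_k}) : {perm 'I_k} :=
  (\prod_(i < r) tperm (f i).1 (f i).2)%g.

Definition c_coef (k r : nat) (pi : {perm 'I_k}) : nat :=
  #|[set f : {ffun 'I_r -> 'I_k * 'I_k} |
      [&& [forall i : 'I_r, (f i).1 < (f i).2],
          [forall i : 'I_r, forall j : 'I_r, (i <= j) ==> ((f i).2 <= (f j).2)] &
          trans_prod f == pi]]|%N.

Definition prod_of_transp (k : nat) (pi : {perm 'I_k}) (r : nat) : bool :=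
  [exists f : {ffun 'I_r -> 'I_k * 'I_k},
     [forall i : 'I_r, (f i).1 != (f i).2] && (trans_prod f == pi)].

Lemma prod_of_transp_ex (k : nat) (pi : {perm 'I_k}) :
  exists r, prod_of_transp pi r.
Proof.
case: (prod_tpermP pi) => ts -> Hd.
exists (size ts); apply/existsP.
exists [ffun i => tnth (in_tuple ts) i].
apply/andP; split.
  apply/forallP => i; rewrite ffunE.
  by move/allP: Hd; apply; apply: mem_tnth.
rewrite /trans_prod (big_tnth _ _ ts).
by apply/eqP; apply: eq_bigr => i _; rewrite ffunE.
Qed.

Definition perm_length (k : nat) (pi : {perm 'I_k}) : nat :=
  ex_minn (prod_of_transp_ex pi).

(* r-th term of the series  Wg(pi) = n^{-k} sum_r (-1)^r c_r(pi) / n^r  *)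
Section Reals.
Local Open Scope R_scope.
Definition Wg_term (n k : nat) (pi : {perm 'I_k}) (r : nat) : R :=
  / (INR n ^ k) * ((-1) ^ r * INR (c_coef r pi) / (INR n ^ r)).

Definition is_Wg (n k : nat) (pi : {perm 'I_k}) (W : R) : Prop :=
  infinite_sum (Wg_term n pi) W.
End Reals.

(* Main.v *)
Require Import Defs.
From Stdlib Require Import Reals Lra Lia.
From mathcomp Require Import all_boot all_fingroup zify.
Set Implicit Arguments.
Unset Strict Implicit.
Unset Printing Implicit Defensive.

Lemma tperm_inj_lt k (a b c d : 'I_k) : a < b -> c < d ->
  tperm a b = tperm c d -> (a, b) = (c, d).
Proof.
move=> ab cd E.
have := congr1 (fun s : {perm 'I_k} => s a) E; rewrite tpermL.
case: tpermP => [ac bd | ad bc | _ _ ba].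
- by rewrite ac bd.
- by move: ab cd; rewrite ad -bc => /ltnW; rewrite leqNgt => /negbTE ->.
- by move: ab; rewrite ba ltnn.
Qed.

Definition Pk k := [set p : 'I_k * 'I_k | p.1 < p.2].

Lemma card_Pk k : 2 * #|Pk k| <= k * k.
Proof.
set Q := [set p : 'I_k * 'I_k | p.2 < p.1].
have sw : injective (fun p : 'I_k * 'I_k => (p.2, p.1)) by move=> [? ?] [? ?] [-> ->].
have PQ : #|Pk k| <= #|Q|.
  rewrite -(card_imset (Pk k) sw); apply: subset_leq_card.
  by apply/subsetP => p /imsetP [x]; rewrite !inE => H ->.
have dis : Pk k :&: Q = set0.
  apply/setP => p; rewrite !inE; apply/negP => /andP [H1 H2].
  by move: (ltn_trans H1 H2); rewrite ltnn.
have := cardsUI (Pk k) Q; rewrite dis cards0 addn0 => E.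
have : #|Pk k :|: Q| <= k * k.
  by apply: leq_trans (max_card _) _; rewrite card_prod card_ord.
rewrite E; lia.
Qed.

Lemma c_coef_le k r (pi : {perm 'I_k}) : c_coef r.+1 pi <= #|Pk k| ^ r.
Proof.
rewrite /c_coef.
set A := [set f | _].
pose phi (f : {ffun 'I_r.+1 -> 'I_k * 'I_k}) :=
  [ffun i : 'I_r => f (widen_ord (leqnSn r) i) : 'I_k * 'I_k].
have inj : {in A &, injective phi}.
  move=> f g; rewrite !inE => /and3P [f1 _ /eqP f3] /and3P [g1 _ /eqP g3] E.
  have Ew : forall i : 'I_r, f (widen_ord (leqnSn r) i) = g (widen_ord (leqnSn r) i).
    by move=> i; have := congr1 (fun h : {ffun 'I_r -> 'I_k * 'I_k} => h i) E; rewrite !ffunE.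
  have Hl : (f ord_max).1 < (f ord_max).2 by move/forallP: f1.
  have Hg : (g ord_max).1 < (g ord_max).2 by move/forallP: g1.
  have Et : tperm (f ord_max).1 (f ord_max).2 = tperm (g ord_max).1 (g ord_max).2.
    move: f3; rewrite -g3 /trans_prod !big_ord_recr /=.
    under eq_bigr => i _ do rewrite Ew.
    by move/mulgI.
  have Em := tperm_inj_lt Hl Hg Et.
  apply/ffunP => i.
  have [lt_ir|ge] := ltnP i r.
    by have -> : i = widen_ord (leqnSn r) (Ordinal lt_ir) by apply: val_inj.
  have -> : i = ord_max by apply: val_inj => /=; have := ltn_ord i; lia.
  by rewrite [f _]surjective_pairing [g _]surjective_pairing.
rewrite -(card_in_imset inj).
rewrite -[r in _ ^ r]card_ord -(card_ffun_on 'I_r (Pk k)).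
apply: subset_leq_card; apply/subsetP => h /imsetP [f]; rewrite inE => /and3P [f1 _ _] ->.
apply/ffun_onP => i; rewrite ffunE inE.
by move/forallP: f1.
Qed.
Lemma c_coef_small k r (pi : {perm 'I_k}) : r < perm_length pi -> c_coef r pi = 0.
Proof.
move=> lt; apply/eqP; rewrite cards_eq0; apply/eqP/setP => f.
rewrite inE in_set0; apply/negP => /and3P [H1 _ H2].
have Hp : prod_of_transp pi r.
  apply/existsP; exists f; rewrite H2 andbT; apply/forallP => i.
  by move/forallP: H1 => /(_ i); rewrite neq_ltn => ->.
move: lt; rewrite /perm_length; case: ex_minnP => m _ Hmin.
by rewrite ltnNge (Hmin _ Hp).
Qed.

Lemma odd_prod k r (F : 'I_r -> {perm 'I_k}) :
  (forall i, odd_perm (F i)) -> odd_perm (\prod_(i < r) F i)%g = odd r.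
Proof.
elim: r F => [|r IH] F HF; first by rewrite big_ord0 odd_perm1.
rewrite big_ord_recr odd_permM IH ?HF //=; by case: (odd r).
Qed.

Lemma c_coef_odd k r : odd r -> c_coef r (1 : {perm 'I_k}) = 0.
Proof.
move=> Or; apply/eqP; rewrite cards_eq0; apply/eqP/setP => f.
rewrite inE in_set0; apply/negP => /and3P [H1 _ /eqP H2].
have := @odd_prod k r (fun i => tperm (f i).1 (f i).2).
rewrite -/(trans_prod f) H2 odd_perm1 Or => H; suff : false by [].
apply: H => i; rewrite odd_tperm neq_ltn.
by move/forallP: H1 => /(_ i) ->.
Qed.

Lemma c_coef_0 k (pi : {perm 'I_k}) : c_coef 0 pi <= 1.
Proof.
apply: leq_trans (max_card _) _.
by rewrite card_ffun card_ord expn0.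
Qed.

Lemma length_pos k (pi : {perm 'I_k}) : pi != 1%g -> 0 < perm_length pi.
Proof.
move=> H; rewrite /perm_length; case: ex_minnP => m Hm _.
case: m Hm => [|m] // /existsP [f /andP [_ /eqP E]].
by move: H; rewrite -E /trans_prod big_ord0 eqxx.
Qed.
Local Open Scope R_scope.

Lemma series_bound (a : nat -> R) (T : R) :
  (forall N, sum_f_R0 (fun i => Rabs (a i)) N <= T) ->
  exists W, infinite_sum a W /\ Rabs W <= T.
Proof.
move=> H.
have Hg : Un_growing (sum_f_R0 (fun i => Rabs (a i))).
  by move=> N; rewrite tech5; have := Rabs_pos (a N.+1); lra.
have Hb : has_ub (sum_f_R0 (fun i => Rabs (a i))).
  by exists T => x [i ->]; apply: H.
have [W HW] := cv_cauchy_2 _ (cauchy_abs _ (cv_cauchy_1 _ (growing_cv _ Hg Hb))).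
exists W; split; first exact: HW.
apply: Rnot_lt_le => Hlt.
have [N HN] := HW (Rabs W - T) ltac:(lra).
have := HN N (Nat.le_refl N); rewrite /Rdist => H1.
have := sum_f_R0_triangle a N; have := H N.
have := Rabs_triang_inv W (sum_f_R0 a N); rewrite Rabs_minus_sym.
lra.
Qed.

Lemma inv_sum (e g : nat -> R) (T : R) :
  (forall N, 0 <= g N) -> e 0%nat + g 0%nat = T ->
  (forall N, e N.+1 + g N.+1 = g N) -> forall N, sum_f_R0 e N <= T.
Proof.
move=> Hg H0 HS N.
suff E : sum_f_R0 e N + g N = T by have := Hg N; lra.
elim: N => [|N IH] /=; first exact: H0.
by have := HS N; lra.
Qed.

Lemma INR_expn m r : INR (m ^ r)%N = INR m ^ r.
Proof.
elim: r => [|r IH]; first by rewrite expn0.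
by rewrite expnS mulnE mult_INR IH.
Qed.

Lemma Wg_abs n k (pi : {perm 'I_k}) r : (0 < n)%N ->
  Rabs (Wg_term n pi r) = INR (c_coef r pi) / (INR n ^ k * INR n ^ r).
Proof.
move=> hn; have np : 0 < INR n by apply: lt_0_INR; apply/ltP.
have A := pow_lt _ k np; have B := pow_lt _ r np.
rewrite /Wg_term Rabs_mult Rabs_inv Rabs_pos_eq; last lra.
rewrite /Rdiv Rabs_mult Rabs_mult pow_1_abs Rabs_inv (Rabs_pos_eq (INR _)); last exact: pos_INR.
rewrite (Rabs_pos_eq (_ ^ r)); last lra.
field; lra.
Qed.

Lemma c_real k m (pi : {perm 'I_k}) :
  INR (c_coef m.+1 pi) * 2 ^ m <= (INR k ^ 2) ^ m.
Proof.
have H1 : INR (c_coef m.+1 pi) <= INR #|Pk k| ^ m.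
  by rewrite -INR_expn; apply: le_INR; apply/leP; apply: c_coef_le.
have H2 : 2 * INR #|Pk k| <= INR k ^ 2.
  have := card_Pk k => /leP /le_INR; rewrite !mulnE !mult_INR /=; lra.
have H3 : 0 <= 2 ^ m by apply: pow_le; lra.
apply: Rle_trans (Rmult_le_compat_r _ _ _ H3 H1) _.
rewrite -Rpow_mult_distr Rmult_comm.
apply: pow_incr; split; last exact: H2.
have := pos_INR #|Pk k|; lra.
Qed.

Lemma term_bound n k (pi : {perm 'I_k}) m : (0 < n)%N -> (0 < k)%N ->
  Rabs (Wg_term n pi m.+1) <=
  2 / (INR n ^ k * INR k ^ 2) * (INR k ^ 2 / (2 * INR n)) ^ m.+1.
Proof.
move=> hn hk; rewrite Wg_abs //.
have np : 0 < INR n by apply: lt_0_INR; apply/ltP.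
have kp : 0 < INR k by apply: lt_0_INR; apply/ltP.
have A := pow_lt _ k np; have B := pow_lt _ m np.
have P := pow_lt 2 m ltac:(lra).
have K : 0 < INR k ^ 2 by apply: pow_lt.
have := c_real m pi.
set c := INR _; set X := (INR k ^ 2) ^ m => Hc.
rewrite /Rdiv Rpow_mult_distr pow_inv Rpow_mult_distr /= -/X.
have -> : 2 * / (INR n ^ k * (INR k * (INR k * 1))) *
  (INR k * (INR k * 1) * X * / (2 * 2 ^ m * (INR n * INR n ^ m)))
  = X / 2 ^ m * / (INR n ^ k * (INR n * INR n ^ m)).
  field; repeat split; lra.
apply: Rmult_le_compat_r.
  apply: Rlt_le; apply: Rinv_0_lt_compat; apply: Rmult_lt_0_compat => //.
  exact: Rmult_lt_0_compat.
apply: (Rmult_le_reg_r (2 ^ m)) => //.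
rewrite /Rdiv Rmult_assoc Rinv_l; lra.
Qed.

Theorem lemma5 (n k : nat) (hn : (0 < n)%N) (hk : (0 < k)%N)
    (hkn : (k ^ 2 < 2 * n)%N) :
  (forall pi : {perm 'I_k}, pi <> 1%g ->
     exists W : R, is_Wg n pi W /\
       Rabs W <= 2 / (INR n ^ k * INR k ^ 2)
                  * (INR k ^ 2 / (2 * INR n)) ^ perm_length pi
                  * (1 / (1 - INR k ^ 2 / (2 * INR n)))) /\
  (exists W : R, is_Wg n (1%g : {perm 'I_k}) W /\
     Rabs W <= 1 / INR n ^ k
                + INR k ^ 2 / (2 * INR n ^ (k + 2))
                  * (1 / (1 - INR k ^ 4 / (4 * INR n ^ 2)))).
Proof.
have np : 0 < INR n by apply: lt_0_INR; apply/ltP.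
have kp : 0 < INR k by apply: lt_0_INR; apply/ltP.
have A := pow_lt _ k np.
have K : 0 < INR k ^ 2 by apply: pow_lt.
have Hkn : INR k ^ 2 < 2 * INR n.
  have := hkn => /ltP /lt_INR; rewrite INR_expn mulnE mult_INR /=; lra.
set q := INR k ^ 2 / (2 * INR n).
have q0 : 0 < q by rewrite /q; apply: Rdiv_lt_0_compat; lra.
have q1 : q < 1.
  rewrite /q; apply: (Rmult_lt_reg_r (2 * INR n)); first lra.
  rewrite /Rdiv Rmult_assoc Rinv_l; lra.
set C := 2 / (INR n ^ k * INR k ^ 2).
have C0 : 0 < C by rewrite /C; apply: Rdiv_lt_0_compat; [lra|apply: Rmult_lt_0_compat].
split.
  move=> pi Hpi.
  have Lp : (0 < perm_length pi)%N by apply: length_pos; apply/eqP.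
  set L := perm_length pi in Lp *.
  apply: series_bound => N.
  apply: (Rle_trans _ (sum_f_R0 (fun r => if (L <= r)%N then C * q ^ r else 0) N)).
    apply: sum_Rle => r _.
    case: (leqP L r) => H.
      case: r H => [|m] H; first by move: (leq_trans Lp H).
      exact: term_bound.
    by rewrite Wg_abs // c_coef_small //= /Rdiv Rmult_0_l; lra.
  apply: (inv_sum (g := fun N => C * q ^ (maxn N.+1 L) / (1 - q))).
  - move=> M; apply: Rlt_le; apply: Rdiv_lt_0_compat; last lra.
    by apply: Rmult_lt_0_compat => //; apply: pow_lt.
  - have -> : (L <= 0)%N = false by apply/negbTE; rewrite -ltnNge.
    have -> : maxn 1 L = L by lia.
    field; lra.
  - move=> M; case: (leqP L M.+1) => H.
      have -> : maxn M.+2 L = M.+2 by lia.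
      have E2 : maxn M.+1 L = M.+1 by lia.
      have -> : q ^ M.+2 = q * q ^ M.+1 by [].
      field; lra.
    have -> : maxn M.+2 L = L by lia.
    lra.
apply: series_bound => N.
apply: (Rle_trans _ (sum_f_R0 (fun r => if r == 0%N then 1 / INR n ^ k
     else if odd r then 0 else C * q ^ r) N)).
  apply: sum_Rle => r _.
  case: r => [|m] /=.
    rewrite Wg_abs //= Rmult_1_r /Rdiv; apply: Rmult_le_compat_r.
      by apply: Rlt_le; apply: Rinv_0_lt_compat.
    by have := c_coef_0 (1 : {perm 'I_k}) => /leP /le_INR.
  case: ifP => Ho.
    by rewrite Wg_abs // c_coef_odd //= /Rdiv Rmult_0_l; lra.
  exact: term_bound.
have q2 : 0 < q ^ 2 < 1.
  split; first by apply: pow_lt.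
  by rewrite /= Rmult_1_r; have := Rmult_lt_compat_r q _ _ q0 q1; lra.
apply: (inv_sum (g := fun N => C * (q ^ 2) ^ (N./2).+1 / (1 - q ^ 2))).
- move=> M; apply: Rlt_le; apply: Rdiv_lt_0_compat; last lra.
  by apply: Rmult_lt_0_compat => //; apply: pow_lt; lra.
- have H4 : INR k * (INR k * (INR k * INR k)) < 4 * (INR n * INR n).
    have : INR k ^ 2 * INR k ^ 2 < (2 * INR n) * (2 * INR n) by nra.
    rewrite /=; lra.
  rewrite /= /C /q pow_add; field; repeat split; lra.
- move=> M; rewrite -uphalfE uphalf_half.
  have -> : (M.+1 == 0)%N = false by [].
  have -> : odd M.+1 = ~~ odd M by [].
  case HM: (odd M).
    have -> : M.+1 = (2 * (M./2).+1)%N.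
      have := odd_double_half M; rewrite HM -muln2; lia.
    rewrite mulnE pow_mult add1n.
    have -> : (q ^ 2) ^ (M./2).+2 = q ^ 2 * (q ^ 2) ^ (M./2).+1 by [].
    rewrite /=; field; lra.
  rewrite add0n /=; lra.
Qed.
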